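(* Let $(\Lambda_0,\le)$ and $(\Lambda_1,\le)$ be $\aleph_1$-directed posets, and let $(E_{\lambda_0})_{\lambda_0\in\Lambda_0}$ and $(F_{\lambda_1})_{\lambda_1\in\Lambda_1}$ be diagrams in $\mathbf{OSp}$ indexed by them. Then the canonical map \[\varinjlim_{(\lambda_0,\lambda_1)\in\Lambda_0\times\Lambda_1} E_{\lambda_0}\otimes_h F_{\lambda_1}\longrightarrow\Big(\varinjlim_{\lambda_0}E_{\lambda_0}\Big)\otimes_h\Big(\varinjlim_{\lambda_1}F_{\lambda_1}\Big)\] is an isomorphism in $\mathbf{OSp}$.
   Context: $\mathbf{OSp}$ is the category of (not necessarily complete) operator spaces with completely contractive linear maps; colimits are taken in $\mathbf{OSp}$. $\otimes_h$ is the (algebraic, not completed) Haagerup tensor product of operator spaces: for $x\in M_{mn}(E\otimes F)$, $\|x\|_h=\inf\{\|(e_{ij})\|\,\|(f_{jk})\|: (e_{ij})\in M_{mk}(E),(f_{jk})\in M_{kn}(F), (e_{ij})\odot(f_{jk})=x\}$, where $(e_{ij})\odot(f_{jk})=(\sum_j e_{ij}\otimes f_{jk})_{i,k}$. A poset is $\aleph_1$-directed if every countable subset has an upper bound. *)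

(* Defs.v *)
From HB Require Import structures.
From mathcomp Require Import all_boot all_order all_algebra.
From mathcomp Require Import complex.
From mathcomp Require Import boolp classical_sets cardinality reals.
Set Implicit Arguments.
Unset Strict Implicit.
Unset Printing Implicit Defensive.
Import Order.TTheory GRing.Theory Num.Theory.
Local Open Scope ring_scope.
Local Open Scope classical_set_scope.

Section OperatorSpaces.
Variable R : realType.
Local Notation C := (complex R).

Definition cabs2 (z : C) : R := complex.Re z ^+ 2 + complex.Im z ^+ 2.
Definition cabs (z : C) : R := Num.sqrt (cabs2 z).
Definition l2norm n (v : 'cV[C]_n) : R := Num.sqrt (\sum_(i < n) cabs2 (v i 0)).

Definition opnorm p m (a : 'M[C]_(p, m)) : R :=
  sup [set l2norm (a *m v) | v in [set v : 'cV[C]_m | l2norm v <= 1]].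

Definition lin (V W : lmodType C) (f : V -> W) : Prop :=
  forall (a : C) (u v : V), f (a *: u + v) = a *: f u + f v.

Definition lmulmx (V : lmodType C) p m n (a : 'M[C]_(p, m)) (x : 'M[V]_(m, n))
  : 'M[V]_(p, n) := \matrix_(i, k) \sum_j a i j *: x j k.
Definition rmulmx (V : lmodType C) m n q (x : 'M[V]_(m, n)) (b : 'M[C]_(n, q))
  : 'M[V]_(m, q) := \matrix_(i, k) \sum_j b j k *: x i j.

(* (abstract) operator spaces, via Ruan's axioms, stated for all
   rectangular matrix levels M_{m,n}(V). Not necessarily complete. *)
Record opspace := OpSpace {
  ospace :> lmodType C;
  mnorm : forall m n, 'M[ospace]_(m, n) -> R;
  mnorm_eq0 : forall m n (x : 'M[ospace]_(m, n)), mnorm x = 0 -> x = 0;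
  mnorm_triangle : forall m n (x y : 'M[ospace]_(m, n)),
      mnorm (x + y) <= mnorm x + mnorm y;
  mnormZ : forall m n (c : C) (x : 'M[ospace]_(m, n)),
      mnorm (map_mx (fun v => c *: v) x) = cabs c * mnorm x;
  ruan1 : forall p m n q (a : 'M[C]_(p, m)) (x : 'M[ospace]_(m, n))
      (b : 'M[C]_(n, q)),
      mnorm (rmulmx (lmulmx a x) b) <= opnorm a * mnorm x * opnorm b;
  ruan2 : forall m n m' n' (x : 'M[ospace]_(m, n)) (y : 'M[ospace]_(m', n')),
      mnorm (block_mx x 0 0 y) = Num.max (mnorm x) (mnorm y)
}.

Definition ccmap (E F : opspace) (f : E -> F) : Prop :=
  lin f /\ forall m n (x : 'M[E]_(m, n)), mnorm (map_mx f x) <= mnorm x.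

Definition osp_iso (E F : opspace) (f : E -> F) : Prop :=
  ccmap f /\ exists g : F -> E, ccmap g /\ cancel f g /\ cancel g f.

(* Diagrams in OSp indexed by a preordered index set (I, le).  The
   transition maps are given as a total family e i j, only meaningful
   (and constrained) when le i j holds. *)
Definition osp_diagram (I : Type) (le : I -> I -> Prop) (E : I -> opspace)
  (e : forall i j, E i -> E j) : Prop :=
  (forall i j, le i j -> ccmap (e i j)) /\
  (forall i x, le i i -> e i i x = x) /\
  (forall i j k x, le i j -> le j k -> e i k x = e j k (e i j x)).

Definition osp_cocone (I : Type) (le : I -> I -> Prop) (E : I -> opspace)
  (e : forall i j, E i -> E j) (L : opspace) (c : forall i, E i -> L) : Prop :=
  (forall i, ccmap (c i)) /\
  (forall i j x, le i j -> c j (e i j x) = c i x).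

Definition osp_colimit (I : Type) (le : I -> I -> Prop) (E : I -> opspace)
  (e : forall i j, E i -> E j) (L : opspace) (c : forall i, E i -> L) : Prop :=
  osp_cocone le e c /\
  forall (W : opspace) (g : forall i, E i -> W), osp_cocone le e g ->
    exists! h : L -> W, ccmap h /\ forall i x, h (c i x) = g i x.

Definition bilin (U V W : lmodType C) (b : U -> V -> W) : Prop :=
  (forall v, lin (fun u => b u v)) /\ (forall u, lin (b u)).

Definition is_tensor (U V T : lmodType C) (t : U -> V -> T) : Prop :=
  bilin t /\
  forall (W : lmodType C) (b : U -> V -> W), bilin b ->
    exists! h : T -> W, lin h /\ forall u v, h (t u v) = b u v.

Definition tmulmx (U V T : lmodType C) (t : U -> V -> T) m k n
  (e : 'M[U]_(m, k)) (f : 'M[V]_(k, n)) : 'M[T]_(m, n) :=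
  \matrix_(i, l) \sum_j t (e i j) (f j l).

(* X, with t : E -> F -> X, is the (algebraic, uncompleted) Haagerup tensor
   product E (x)_h F: X is the algebraic tensor product and its matrix norms
   are the Haagerup norms. *)
Definition is_haagerup (E F X : opspace) (t : E -> F -> X) : Prop :=
  is_tensor t /\
  forall m n (x : 'M[X]_(m, n)),
    mnorm x = inf [set r : R | exists k (e : 'M[E]_(m, k)) (f : 'M[F]_(k, n)),
                                tmulmx t e f = x /\ r = mnorm e * mnorm f].

End OperatorSpaces.

Definition aleph1_directed (d : Order.disp_t) (L : porderType d) : Prop :=
  forall A : set L, countable A -> exists u : L, forall a, A a -> (a <= u)%O.

Definition prod_le (d0 d1 : Order.disp_t) (L0 : porderType d0) (L1 : porderType d1)
  (p q : L0 * L1) : Prop := (p.1 <= q.1)%O /\ (p.2 <= q.2)%O.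

(* Main.v *)
Require Import Defs.
From HB Require Import structures.
From mathcomp Require Import all_boot all_order all_algebra.
From mathcomp Require Import complex.
From mathcomp Require Import boolp classical_sets cardinality reals.
From mathcomp Require Import ring lra.
Set Implicit Arguments. Unset Strict Implicit. Unset Printing Implicit Defensive.
Import Order.TTheory GRing.Theory Num.Theory.
Local Open Scope ring_scope.
Local Open Scope classical_set_scope.
Section Basics.
Variable R : realType.
Local Notation C := (complex R).

Lemma mulcE (a b c d : R) : (Complex a b : C) * Complex c d = Complex (a*c - b*d) (a*d + b*c).
Proof. by []. Qed.

Lemma cabs_ge0 (c : C) : 0 <= cabs c.
Proof. exact: sqrtr_ge0. Qed.

Lemma cabs0 : cabs (0 : C) = 0.
Proof. by rewrite /cabs /cabs2 /= (_ : _ + _ = 0 :> R) ?sqrtr0 //; ring. Qed.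

Lemma cabsM (a b : C) : cabs (a * b) = cabs a * cabs b.
Proof.
case: a => a1 a2; case: b => b1 b2; rewrite mulcE /cabs /cabs2 /= -sqrtrM.
  by congr Num.sqrt; ring.
by rewrite addr_ge0 // sqr_ge0.
Qed.

Lemma cabs1 : cabs (1 : C) = 1.
Proof. by rewrite /cabs /cabs2 /= (_ : _ + _ = 1 :> R) ?sqrtr1 //; ring. Qed.

Lemma cabsN1 : cabs (-1 : C) = 1.
Proof. by rewrite /cabs /cabs2 /= (_ : _ + _ = 1 :> R) ?sqrtr1 //; ring. Qed.

Lemma cabs_real (r : R) : 0 <= r -> cabs (Complex r 0) = r.
Proof. by move=> r0; rewrite /cabs /cabs2 /= (_ : _ + _ = r ^+ 2 :> R) ?sqrtr_sqr ?ger0_norm //; ring. Qed.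

Section Lin.
Variables (V W : lmodType C) (f : V -> W).
Hypothesis hf : lin f.
Lemma lin0 : f 0 = 0.
Proof.
have := hf 1 0 0; rewrite !scale1r addr0 => h.
by apply: (addrI (f 0)); rewrite addr0 -h.
Qed.
Lemma linD u v : f (u + v) = f u + f v.
Proof. by have := hf 1 u v; rewrite !scale1r. Qed.
Lemma linZ a u : f (a *: u) = a *: f u.
Proof. by have := hf a u 0; rewrite !addr0 lin0 addr0. Qed.
Lemma linN u : f (- u) = - f u.
Proof. by rewrite -scaleN1r linZ scaleN1r. Qed.
Lemma linB u v : f (u - v) = f u - f v.
Proof. by rewrite linD linN. Qed.
Lemma lin_sum (I : Type) (r : seq I) (P : pred I) (F : I -> V) :
  f (\sum_(i <- r | P i) F i) = \sum_(i <- r | P i) f (F i).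
Proof. exact: (big_morph f linD lin0). Qed.

Lemma map_lmulmx p m n (a : 'M[C]_(p, m)) (x : 'M[V]_(m, n)) :
  map_mx f (lmulmx a x) = lmulmx a (map_mx f x).
Proof.
apply/matrixP => i j; rewrite !mxE lin_sum; apply: eq_bigr => k _.
by rewrite linZ mxE.
Qed.
Lemma map_rmulmx m n q (x : 'M[V]_(m, n)) (b : 'M[C]_(n, q)) :
  map_mx f (rmulmx x b) = rmulmx (map_mx f x) b.
Proof.
apply/matrixP => i j; rewrite !mxE lin_sum; apply: eq_bigr => k _.
by rewrite linZ mxE.
Qed.
Lemma map_mxD_lin m n (x y : 'M[V]_(m, n)) : map_mx f (x + y) = map_mx f x + map_mx f y.
Proof. by apply/matrixP => i j; rewrite !mxE linD. Qed.
Lemma map_mx0' m n : map_mx f (0 : 'M[V]_(m, n)) = 0.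
Proof. by apply/matrixP => i j; rewrite !mxE lin0. Qed.
Lemma map_mxZ_lin m n c (x : 'M[V]_(m, n)) :
  map_mx f (map_mx ( *:%R c) x) = map_mx ( *:%R c) (map_mx f x).
Proof. by apply/matrixP => i j; rewrite !mxE linZ. Qed.
End Lin.

Lemma lin_comp (U V W : lmodType C) (f : U -> V) (g : V -> W) :
  lin f -> lin g -> lin (g \o f).
Proof. by move=> hf hg a u v /=; rewrite hf hg. Qed.

Lemma lin_id (V : lmodType C) : lin (@id V).
Proof. by []. Qed.

Section Norms.
Variable E : opspace R.

Lemma mnorm0 m n : mnorm (0 : 'M[E]_(m, n)) = 0.
Proof.
have := mnormZ 0 (0 : 'M[E]_(m, n)); rewrite cabs0 mul0r => <-.
by congr mnorm; apply/matrixP => i j; rewrite !mxE scale0r.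
Qed.

Lemma mnormN m n (x : 'M[E]_(m, n)) : mnorm (- x) = mnorm x.
Proof.
have := mnormZ (-1) x; rewrite cabsN1 mul1r => <-.
by congr mnorm; apply/matrixP => i j; rewrite !mxE scaleN1r.
Qed.

Lemma mnorm_ge0 m n (x : 'M[E]_(m, n)) : 0 <= mnorm x.
Proof.
have := mnorm_triangle x (- x); rewrite subrr mnorm0 mnormN -mulr2n.
by rewrite -mulr_natl pmulr_rge0.
Qed.
End Norms.

Lemma ccmap_comp (E F G : opspace R) (f : E -> F) (g : F -> G) :
  ccmap f -> ccmap g -> ccmap (g \o f).
Proof.
move=> [lf nf] [lg ng]; split; first exact: lin_comp.
move=> m n x; rewrite map_mx_comp; apply: le_trans (ng _ _ _) (nf _ _ _).
Qed.

Lemma ccmap_id (E : opspace R) : ccmap (@id E).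
Proof. by split => // m n x; rewrite map_mx_id. Qed.

End Basics.
Section Matrices.
Variable R : realType.
Local Notation C := (complex R).

Lemma cabs2_ge0 (c : C) : 0 <= cabs2 c.
Proof. by rewrite /cabs2 addr_ge0 // sqr_ge0. Qed.

Lemma l2norm0 n : l2norm (0 : 'cV[C]_n) = 0.
Proof.
rewrite /l2norm big1 ?sqrtr0 // => i _; rewrite mxE /cabs2 /=.
by rewrite (_ : _ + _ = 0 :> R) //; ring.
Qed.

Lemma opnorm_ge0 p m (a : 'M[C]_(p, m)) : 0 <= opnorm a.
Proof.
rewrite /opnorm; set S := [set _ | _ in _].
have S0 : S 0 by exists 0; [rewrite /= l2norm0 | rewrite mulmx0 l2norm0].
have [hs|hs] := pselect (has_sup S); last by rewrite sup_out.
exact: sup_upper_bound.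
Qed.

Lemma opnorm_le1 p m (a : 'M[C]_(p, m)) :
  (forall v, l2norm (a *m v) <= l2norm v) -> opnorm a <= 1.
Proof.
move=> h; rewrite /opnorm; apply: ge_sup.
  by exists 0, 0; [rewrite /= l2norm0 | rewrite mulmx0 l2norm0].
by move=> _ [v /= v1 <-]; apply: le_trans (h v) v1.
Qed.

Lemma l2norm_usub m1 m2 (v : 'cV[C]_(m1 + m2)) : l2norm (usubmx v) <= l2norm v.
Proof.
rewrite /l2norm ler_sqrt; last by rewrite sumr_ge0 // => i _; exact: cabs2_ge0.
rewrite big_split_ord /=.
rewrite (eq_bigr (fun i : 'I_m1 => cabs2 (v (lshift m2 i) 0))); last by move=> i _; rewrite mxE.
by rewrite lerDl sumr_ge0 // => i _; exact: cabs2_ge0.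
Qed.

End Matrices.
Section Compress.
Variable R : realType.
Local Notation C := (complex R).
Variable V : lmodType C.

Lemma lmul_row p m1 m2 n (A : 'M[C]_(p, m1)) (B : 'M[C]_(p, m2)) (Z : 'M[V]_(m1 + m2, n)) :
  lmulmx (row_mx A B) Z = lmulmx A (usubmx Z) + lmulmx B (dsubmx Z).
Proof.
apply/matrixP => i k; rewrite !mxE big_split_ord /=; congr (_ + _); apply: eq_bigr => j _.
  by rewrite row_mxEl mxE.
by rewrite row_mxEr mxE.
Qed.

Lemma rmul_col m n1 n2 q (Z : 'M[V]_(m, n1 + n2)) (A : 'M[C]_(n1, q)) (B : 'M[C]_(n2, q)) :
  rmulmx Z (col_mx A B) = rmulmx (lsubmx Z) A + rmulmx (rsubmx Z) B.
Proof.
apply/matrixP => i k; rewrite !mxE big_split_ord /=; congr (_ + _); apply: eq_bigr => j _.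
  by rewrite col_mxEu mxE.
by rewrite col_mxEd mxE.
Qed.

Lemma lmul1 m n (X : 'M[V]_(m, n)) : lmulmx 1%:M X = X.
Proof.
apply/matrixP => i k; rewrite mxE (bigD1 i) //= mxE eqxx mulr1n scale1r big1 ?addr0 //.
by move=> j; rewrite mxE eq_sym => /negbTE ->; rewrite mulr0n scale0r.
Qed.

Lemma rmul1 m n (X : 'M[V]_(m, n)) : rmulmx X 1%:M = X.
Proof.
apply/matrixP => i k; rewrite mxE (bigD1 k) //= mxE eqxx mulr1n scale1r big1 ?addr0 //.
by move=> j /negbTE; rewrite mxE => ->; rewrite mulr0n scale0r.
Qed.

Lemma lmul0 p m n (X : 'M[V]_(m, n)) : lmulmx (0 : 'M[C]_(p, m)) X = 0.
Proof. by apply/matrixP => i k; rewrite !mxE big1 // => j _; rewrite mxE scale0r. Qed.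

Lemma rmul0 m n q (X : 'M[V]_(m, n)) : rmulmx X (0 : 'M[C]_(n, q)) = 0.
Proof. by apply/matrixP => i k; rewrite !mxE big1 // => j _; rewrite mxE scale0r. Qed.

Lemma rmul0l m n q (b : 'M[C]_(n, q)) : rmulmx (0 : 'M[V]_(m, n)) b = 0.
Proof. by apply/matrixP => i k; rewrite !mxE big1 // => j _; rewrite mxE scaler0. Qed.

Lemma compress_ul m1 m2 n1 n2 (Z : 'M[V]_(m1 + m2, n1 + n2)) :
  rmulmx (lmulmx (row_mx 1%:M 0) Z) (col_mx 1%:M 0) = ulsubmx Z.
Proof.
rewrite lmul_row lmul1 lmul0 addr0 rmul_col rmul1 rmul0 addr0.
by [].
Qed.

Lemma compress_dr m1 m2 n1 n2 (Z : 'M[V]_(m1 + m2, n1 + n2)) :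
  rmulmx (lmulmx (row_mx 0 1%:M) Z) (col_mx 0 1%:M) = drsubmx Z.
Proof.
rewrite lmul_row lmul1 lmul0 add0r rmul_col rmul1 rmul0 add0r.
by [].
Qed.
End Compress.

Section Compress2.
Variable R : realType.
Local Notation C := (complex R).

Lemma l2norm_dsub m1 m2 (v : 'cV[C]_(m1 + m2)) : l2norm (dsubmx v) <= l2norm v.
Proof.
rewrite /l2norm ler_sqrt; last by rewrite sumr_ge0 // => i _; exact: cabs2_ge0.
rewrite big_split_ord /=.
rewrite (eq_bigr (fun i : 'I_m2 => cabs2 (v (rshift m1 i) 0))); last by move=> i _; rewrite mxE.
by rewrite lerDr sumr_ge0 // => i _; exact: cabs2_ge0.
Qed.

Lemma l2norm_colmx0 m1 m2 (v : 'cV[C]_m1) : l2norm (col_mx v (0 : 'cV[C]_m2)) <= l2norm v.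
Proof.
rewrite /l2norm ler_sqrt; last by rewrite sumr_ge0 // => i _; exact: cabs2_ge0.
rewrite big_split_ord /= [X in _ + X]big1 ?addr0.
  by rewrite le_eqVlt; apply/orP; left; apply/eqP/eq_bigr => i _; rewrite col_mxEu.
move=> i _; rewrite col_mxEd mxE /cabs2 /=.
by rewrite (_ : _ + _ = 0 :> R) //; ring.
Qed.

Lemma l2norm_col0mx m1 m2 (v : 'cV[C]_m2) : l2norm (col_mx (0 : 'cV[C]_m1) v) <= l2norm v.
Proof.
rewrite /l2norm ler_sqrt; last by rewrite sumr_ge0 // => i _; exact: cabs2_ge0.
rewrite big_split_ord /= [X in X + _]big1 ?add0r.
  by rewrite le_eqVlt; apply/orP; left; apply/eqP/eq_bigr => i _; rewrite col_mxEd.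
move=> i _; rewrite col_mxEu mxE /cabs2 /=.
by rewrite (_ : _ + _ = 0 :> R) //; ring.
Qed.

Lemma opnorm_rowl m1 m2 : opnorm (row_mx (1%:M : 'M[C]_m1) (0 : 'M[C]_(m1, m2))) <= 1.
Proof.
apply: opnorm_le1 => v; rewrite -{1}(vsubmxK v) mul_row_col mul1mx mul0mx addr0.
exact: l2norm_usub.
Qed.
Lemma opnorm_rowr m1 m2 : opnorm (row_mx (0 : 'M[C]_(m2, m1)) (1%:M : 'M[C]_m2)) <= 1.
Proof.
apply: opnorm_le1 => v; rewrite -{1}(vsubmxK v) mul_row_col mul1mx mul0mx add0r.
exact: l2norm_dsub.
Qed.
Lemma opnorm_coll n1 n2 : opnorm (col_mx (1%:M : 'M[C]_n1) (0 : 'M[C]_(n2, n1))) <= 1.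
Proof.
apply: opnorm_le1 => v; rewrite mul_col_mx mul1mx mul0mx.
exact: l2norm_colmx0.
Qed.
Lemma opnorm_colr n1 n2 : opnorm (col_mx (0 : 'M[C]_(n1, n2)) (1%:M : 'M[C]_n2)) <= 1.
Proof.
apply: opnorm_le1 => v; rewrite mul_col_mx mul1mx mul0mx.
exact: l2norm_col0mx.
Qed.

Lemma ruan1_contr (E : opspace R) p m n q (a : 'M[C]_(p, m)) (x : 'M[E]_(m, n)) (b : 'M[C]_(n, q)) :
  opnorm a <= 1 -> opnorm b <= 1 -> mnorm (rmulmx (lmulmx a x) b) <= mnorm x.
Proof.
move=> ha hb; apply: le_trans (ruan1 a x b) _.
rewrite -[leRHS]mul1r -[leRHS]mulr1 ler_pM ?mulr_ge0 ?opnorm_ge0 ?mnorm_ge0 //.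
by rewrite ler_pM ?opnorm_ge0 ?mnorm_ge0.
Qed.

Lemma mnorm_ulsub (E : opspace R) m1 m2 n1 n2 (Z : 'M[E]_(m1 + m2, n1 + n2)) :
  mnorm (ulsubmx Z) <= mnorm Z.
Proof. by rewrite -compress_ul ruan1_contr ?opnorm_rowl ?opnorm_coll. Qed.
Lemma mnorm_drsub (E : opspace R) m1 m2 n1 n2 (Z : 'M[E]_(m1 + m2, n1 + n2)) :
  mnorm (drsubmx Z) <= mnorm Z.
Proof. by rewrite -compress_dr ruan1_contr ?opnorm_rowr ?opnorm_colr. Qed.
End Compress2.
Section Diag.
Variable R : realType.
Local Notation C := (complex R).

Definition diagx (V : lmodType C) m (x : V) : 'M[V]_(m, m) :=
  \matrix_(i, j) (if i == j then x else 0).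

Lemma diagxS (V : lmodType C) m (x : V) :
  diagx m.+1 x = block_mx (const_mx x : 'M_1) 0 0 (diagx m x) :> 'M_(1 + m).
Proof.
apply/matrixP => i j; rewrite -(splitK i) -(splitK j).
case: (split i) => i'; case: (split j) => j' /=;
  rewrite ?block_mxEul ?block_mxEur ?block_mxEdl ?block_mxEdr !mxE.
- by rewrite !ord1 eqxx.
- by rewrite eqE /= ord1.
- by rewrite eqE /= ord1.
- by rewrite eqE /= eqn_add2l.
Qed.

Lemma mnorm_diagx (E : opspace R) m (x : E) :
  mnorm (diagx m x) <= mnorm (const_mx x : 'M[E]_(1, 1)).
Proof.
elim: m => [|m IH].
  by rewrite (flatmx0 (diagx 0 x)) mnorm0 mnorm_ge0.
have -> : mnorm (diagx m.+1 x) = mnorm (block_mx (const_mx x : 'M[E]_1) 0 0 (diagx m x)).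
  by rewrite diagxS.
by rewrite ruan2 ge_max lexx /=; exact: IH.
Qed.

Lemma bilin_l0 (U V W : lmodType C) (t : U -> V -> W) (ht : bilin t) y : t 0 y = 0.
Proof. exact: (lin0 (ht.1 y)). Qed.
Lemma bilin_r0 (U V W : lmodType C) (t : U -> V -> W) (ht : bilin t) x : t x 0 = 0.
Proof. exact: (lin0 (ht.2 x)). Qed.

Lemma tmul_diag_l (U V W : lmodType C) (t : U -> V -> W) (ht : bilin t) m n x (Y : 'M[V]_(m, n)) :
  tmulmx t (diagx m x) Y = map_mx (t x) Y.
Proof.
apply/matrixP => i l; rewrite !mxE (bigD1 i) //= mxE eqxx big1 ?addr0 //.
by move=> j /negbTE; rewrite mxE eq_sym => ->; rewrite bilin_l0.
Qed.

Lemma tmul_diag_r (U V W : lmodType C) (t : U -> V -> W) (ht : bilin t) m n (X : 'M[U]_(m, n)) y :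
  tmulmx t X (diagx n y) = map_mx (fun u => t u y) X.
Proof.
apply/matrixP => i l; rewrite !mxE (bigD1 l) //= mxE eqxx big1 ?addr0 //.
by move=> j /negbTE; rewrite mxE => ->; rewrite bilin_r0.
Qed.

Lemma haag_ub (E F X : opspace R) (t : E -> F -> X) (ht : is_haagerup t) m k n
  (e : 'M[E]_(m, k)) (f : 'M[F]_(k, n)) :
  mnorm (tmulmx t e f) <= mnorm e * mnorm f.
Proof.
rewrite ht.2; apply: ge_inf; last by exists k, e, f.
by exists 0 => _ [k' [e' [f' [_ ->]]]]; rewrite mulr_ge0 ?mnorm_ge0.
Qed.

Lemma haag_lb (E F X : opspace R) (t : E -> F -> X) (ht : is_haagerup t) m n
  (Phi : 'M[X]_(m, n) -> R) :
  (forall k (e : 'M[E]_(m, k)) (f : 'M[F]_(k, n)), Phi (tmulmx t e f) <= mnorm e * mnorm f) ->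
  Phi 0 <= 0 -> forall x, Phi x <= mnorm x.
Proof.
move=> hP h0 x; have := ht.2 _ _ x; set S := [set r | _] => hx.
have [[r Sr]|S0] := pselect (S !=set0).
  rewrite hx; apply: lb_le_inf; first by exists r.
  by move=> _ [k [e [f [<- ->]]]]; exact: hP.
have : S = set0 by apply/seteqP; split => // r Sr; apply: S0; exists r.
move=> S0'; rewrite S0' inf0 in hx.
by have := mnorm_eq0 hx => ->; rewrite mnorm0.
Qed.
End Diag.
Section Colim.
Local Unset Implicit Arguments.
Variables (R : realType) (d : Order.disp_t) (L : porderType d).
Local Notation C := (complex R).
Hypothesis Lne : exists l : L, True.
Hypothesis Ldir : forall a b : L, exists c, (a <= c)%O /\ (b <= c)%O.
Variables (E : L -> opspace R) (e : forall i j, E i -> E j).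
Hypothesis hE : osp_diagram (fun i j : L => (i <= j)%O) e.
Variables (LE : opspace R) (cE : forall i, E i -> LE).
Hypothesis hLE : osp_colimit (fun i j : L => (i <= j)%O) e cE.

Lemma ub_seq (s : seq L) : exists u, forall a, a \in s -> (a <= u)%O.
Proof.
elim: s => [|a s [u hu]]; first by case: Lne => l _; exists l.
have [c [ac uc]] := Ldir a u; exists c => b; rewrite inE => /orP[/eqP -> //|/hu bu].
exact: le_trans uc.
Qed.

Lemma cE_lin i : lin (cE i). Proof. exact: (hLE.1.1 i).1. Qed.
Lemma cE_cc {i m n} (x : 'M[E i]_(m, n)) : mnorm (map_mx (cE i) x) <= mnorm x.
Proof. exact: (hLE.1.1 i).2. Qed.
Lemma cE_e {i} j x : (i <= j)%O -> cE j (e i j x) = cE i x.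
Proof. exact: hLE.1.2. Qed.
Lemma e_lin i j : (i <= j)%O -> lin (e i j). Proof. by move=> h; exact: (hE.1 i j h).1. Qed.
Lemma e_cc {i} j {m n} (x : 'M[E i]_(m, n)) : (i <= j)%O -> mnorm (map_mx (e i j) x) <= mnorm x.
Proof. by move=> h; exact: (hE.1 i j h).2. Qed.

Lemma push {i} k {m n} (Y : 'M[E i]_(m, n)) : (i <= k)%O ->
  map_mx (cE k) (map_mx (e i k) Y) = map_mx (cE i) Y.
Proof. by move=> h; apply/matrixP => a b; rewrite !mxE cE_e. Qed.

Lemma lift_mx m n (U : 'M[LE]_(m, n)) :
  (forall a b, exists k x, U a b = cE k x) -> exists k (Y : 'M[E k]_(m, n)), map_mx (cE k) Y = U.
Proof.
move=> h.
have h' : forall p : 'I_m * 'I_n, exists s : {k : L & E k}, U p.1 p.2 = cE (tag s) (tagged s).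
  by move=> [a b]; have [k [x hx]] := h a b; exists (Tagged E x).
have [g hg] := boolp.choice h'.
have [u hu] := ub_seq [seq tag (g p) | p <- enum (predT : pred ('I_m * 'I_n))].
exists u, (\matrix_(a, b) e _ u (tagged (g (a, b)))).
apply/matrixP => a b; rewrite !mxE cE_e; first by rewrite (hg (a, b)).
by apply: hu; apply/mapP; exists (a, b); rewrite ?mem_enum.
Qed.

Definition inimg (u : LE) : bool := `[< exists k x, u = cE k x >].

Lemma inimgP u : inimg u <-> exists k x, u = cE k x.
Proof. by split => [/asboolP | h]; [|apply/asboolP]. Qed.

Lemma inimg_closed : subsemimod_closed inimg.
Proof.
split; first split.
- have [l _] := Lne; apply/inimgP; exists l, 0; by rewrite (lin0 (cE_lin l)).
- move=> u v /inimgP [i [x ->]] /inimgP [j [y ->]]; apply/inimgP.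
  have [k [ik jk]] := Ldir i j; exists k, (e i k x + e j k y).
  by rewrite (linD (cE_lin k)) !cE_e.
- move=> a u /inimgP [i [x ->]]; apply/inimgP; exists i, (a *: x).
  by rewrite (linZ (cE_lin i)).
Qed.

Inductive subT : Type := SubT (u : LE) of inimg u.
Definition subval (s : subT) := let: SubT u _ := s in u.
HB.instance Definition _ := [isSub for subval].
HB.instance Definition _ := [Choice of subT by <:].
HB.instance Definition _ := GRing.SubChoice_isSubLmodule.Build C LE inimg subT inimg_closed.

Lemma subval_lin : lin subval.
Proof. by move=> a u v. Qed.


Lemma eps_lemma (x y K : R) : 0 <= K -> (forall eps, 0 < eps -> x <= y + K * eps) -> x <= y.
Proof.
move=> K0 h; apply/ler_addgt0Pr => eps e0.
have K1 : 0 < K + 1 by rewrite ltr_wpDl.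
apply: le_trans (h (eps / (K + 1)) _) _; first by rewrite divr_gt0.
rewrite lerD2l mulrA ler_pdivrMr //.
by rewrite [X in X <= _]mulrC mulrDr mulr1 lerDl ltW.
Qed.

Lemma sub_lift {m n} (X : 'M[subT]_(m, n)) :
  exists k (Y : 'M[E k]_(m, n)), map_mx (cE k) Y = map_mx subval X.
Proof.
apply: lift_mx => a b; rewrite mxE; case: (X a b) => u /= /inimgP; exact.
Qed.

Definition Nset {m n} (X : 'M[subT]_(m, n)) : set R :=
  [set r | exists k (Y : 'M[E k]_(m, n)), map_mx (cE k) Y = map_mx subval X /\ r = mnorm Y].

Definition N {m n} (X : 'M[subT]_(m, n)) : R := inf (Nset X).

Lemma Nset_ne {m n} (X : 'M[subT]_(m, n)) : Nset X !=set0.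
Proof. by have [k [Y hY]] := sub_lift X; exists (mnorm Y), k, Y. Qed.

Lemma Nset_lb {m n} (X : 'M[subT]_(m, n)) : has_lbound (Nset X).
Proof. by exists 0 => _ [k [Y [_ ->]]]; exact: mnorm_ge0. Qed.

Lemma N_le {m n} (X : 'M[subT]_(m, n)) k (Y : 'M[E k]_(m, n)) :
  map_mx (cE k) Y = map_mx subval X -> N X <= mnorm Y.
Proof. by move=> h; apply: ge_inf; [exact: Nset_lb | exists k, Y]. Qed.

Lemma N_approx {m n} (X : 'M[subT]_(m, n)) {eps} : 0 < eps ->
  exists k (Y : 'M[E k]_(m, n)), map_mx (cE k) Y = map_mx subval X /\ mnorm Y < N X + eps.
Proof.
move=> e0; have [_ [k [Y [hY ->]]] hl] := inf_adherent e0 (conj (Nset_ne X) (Nset_lb X)).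
by exists k, Y.
Qed.

Lemma N_lb {m n} (X : 'M[subT]_(m, n)) : mnorm (map_mx subval X) <= N X.
Proof.
apply: lb_le_inf; first exact: Nset_ne.
by move=> _ [k [Y [hY ->]]]; rewrite -hY; exact: cE_cc.
Qed.

Lemma N_ge0 {m n} (X : 'M[subT]_(m, n)) : 0 <= N X.
Proof. exact: le_trans (mnorm_ge0 _) (N_lb X). Qed.

Lemma N_eq0 {m n} (X : 'M[subT]_(m, n)) : N X = 0 -> X = 0.
Proof.
move=> h; have : mnorm (map_mx subval X) = 0.
  by apply/eqP; rewrite eq_le mnorm_ge0 andbT -h N_lb.
move/mnorm_eq0 => h0; apply/matrixP => a b; apply: val_inj.
have := congr1 (fun M : 'M[LE]_(m, n) => M a b) h0; rewrite !mxE /= => ->.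
exact/esym/(lin0 subval_lin).
Qed.

Lemma common2 (i j : L) : exists k : L, (i <= k)%O /\ (j <= k)%O.
Proof. exact: Ldir. Qed.

Lemma N_triangle {m n} (X Y : 'M[subT]_(m, n)) : N (X + Y) <= N X + N Y.
Proof.
apply: (@eps_lemma _ _ 2) => // eps e0.
have [i [A [hA nA]]] := N_approx X e0.
have [j [B [hB nB]]] := N_approx Y e0.
have [k [ik jk]] := common2 i j.
apply: le_trans (N_le (X + Y) k (map_mx (e i k) A + map_mx (e j k) B) _) _.
  by rewrite (map_mxD_lin (cE_lin k)) !push // hA hB (map_mxD_lin subval_lin).
apply: le_trans (mnorm_triangle _ _) _.
have -> : N X + N Y + 2 * eps = (N X + eps) + (N Y + eps) by ring.
by apply: lerD; apply/ltW; [apply: le_lt_trans (e_cc k A ik) nA | apply: le_lt_trans (e_cc k B jk) nB].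
Qed.

Lemma N_Zle {m n} (c : C) (X : 'M[subT]_(m, n)) :
  N (map_mx ( *:%R c) X) <= cabs c * N X.
Proof.
apply: (@eps_lemma _ _ (cabs c)); first exact: cabs_ge0.
move=> eps e0; have [k [Y [hY nY]]] := N_approx X e0.
apply: le_trans (N_le _ k (map_mx ( *:%R c) Y) _) _.
  by rewrite (map_mxZ_lin (cE_lin k)) hY (map_mxZ_lin subval_lin).
rewrite mnormZ -mulrDr; apply: ler_wpM2l; first exact: cabs_ge0.
exact: ltW.
Qed.

Lemma N_Z {m n} (c : C) (X : 'M[subT]_(m, n)) :
  N (map_mx ( *:%R c) X) = cabs c * N X.
Proof.
apply/eqP; rewrite eq_le N_Zle /=.
have [->|c0] := eqVneq c 0; first by rewrite cabs0 mul0r N_ge0.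
have hX : X = map_mx ( *:%R c^-1) (map_mx ( *:%R c) X).
  by apply/matrixP => a b; rewrite !mxE scalerA mulVf // scale1r.
rewrite [X in _ * N X]hX.
apply: le_trans (ler_wpM2l (cabs_ge0 c) (N_Zle c^-1 _)) _.
by rewrite mulrA -cabsM mulfV // cabs1 mul1r.
Qed.

Lemma N_ruan1 p m n q (a : 'M[C]_(p, m)) (X : 'M[subT]_(m, n)) (b : 'M[C]_(n, q)) :
  N (rmulmx (lmulmx a X) b) <= opnorm a * N X * opnorm b.
Proof.
apply: (@eps_lemma _ _ (opnorm a * opnorm b)); first by rewrite mulr_ge0 ?opnorm_ge0.
move=> eps e0; have [k [Y [hY nY]]] := N_approx X e0.
apply: le_trans (N_le _ k (rmulmx (lmulmx a Y) b) _) _.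
  by rewrite (map_rmulmx (cE_lin k)) (map_lmulmx (cE_lin k)) hY
    (map_rmulmx subval_lin) (map_lmulmx subval_lin).
apply: le_trans (ruan1 a Y b) _.
have -> : opnorm a * N X * opnorm b + opnorm a * opnorm b * eps =
          opnorm a * (N X + eps) * opnorm b by ring.
apply: ler_wpM2r; first exact: opnorm_ge0.
apply: ler_wpM2l; first exact: opnorm_ge0.
exact: ltW.
Qed.

Lemma N_ruan2 m n m' n' (X : 'M[subT]_(m, n)) (Y : 'M[subT]_(m', n')) :
  N (block_mx X 0 0 Y) = Num.max (N X) (N Y).
Proof.
apply/eqP; rewrite eq_le; apply/andP; split.
  apply/ler_addgt0Pr => eps e0.
  have [i [A [hA nA]]] := N_approx X e0.
  have [j [B [hB nB]]] := N_approx Y e0.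
  have [k [ik jk]] := common2 i j.
  apply: le_trans (N_le _ k (block_mx (map_mx (e i k) A) 0 0 (map_mx (e j k) B)) _) _.
    by rewrite !map_block_mx !push // hA hB !(map_mx0' (cE_lin k)) !(map_mx0' subval_lin).
  rewrite ruan2 ge_max; apply/andP; split.
    apply: le_trans (ltW (le_lt_trans (e_cc k A ik) nA)) _.
    by rewrite lerD2r le_max lexx.
  apply: le_trans (ltW (le_lt_trans (e_cc k B jk) nB)) _.
  by rewrite lerD2r le_max lexx orbT.
apply: lb_le_inf; first exact: Nset_ne.
move=> _ [k [Z [hZ ->]]]; rewrite ge_max; apply/andP; split.
  apply: le_trans (mnorm_ulsub Z).
  apply: N_le; by rewrite map_ulsubmx hZ map_block_mx block_mxKul.
apply: le_trans (mnorm_drsub Z).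
apply: N_le; by rewrite map_drsubmx hZ map_block_mx block_mxKdr.
Qed.

Definition SubOS : opspace R :=
  @OpSpace R subT (@N) (@N_eq0) (@N_triangle) (@N_Z) N_ruan1 N_ruan2.

Definition gsub i (x : E i) : SubOS := SubT (cE i x) (proj2 (inimgP _) (ex_intro _ i (ex_intro _ x erefl))).

Lemma gsub_cocone : osp_cocone (fun i j : L => (i <= j)%O) e gsub.
Proof.
split.
  move=> i; split.
    move=> a x y; apply: val_inj => /=.
    by rewrite (cE_lin i).
  move=> m n X; apply: N_le; by apply/matrixP => a b; rewrite !mxE.
by move=> i j x ij; apply: val_inj => /=; rewrite cE_e.
Qed.

Lemma colim_retract : exists h : LE -> SubOS, ccmap h /\ forall u, subval (h u) = u.
Proof.
have [h [[hcc hh] _]] := hLE.2 SubOS gsub gsub_cocone.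
have [h0 [_ hu]] := hLE.2 LE cE hLE.1.
have vh_cc : ccmap (subval \o h).
  split; first exact: lin_comp hcc.1 subval_lin.
  move=> m n U; rewrite map_mx_comp; apply: le_trans (N_lb _) (hcc.2 _ _ U).
have e1 := hu id (conj (ccmap_id LE) (fun i x => erefl)).
have e2 := hu (subval \o h) (conj vh_cc (fun i x => congr1 subval (hh i x))).
exists h; split => // u.
by have := congr1 (fun f => f u) (etrans (esym e2) e1).
Qed.

End Colim.

Lemma colim_surj (R : realType) (d : Order.disp_t) (L : porderType d)
  (Lne : exists l : L, True)
  (Ldir : forall a b : L, exists c, (a <= c)%O /\ (b <= c)%O)
  (E : L -> opspace R) (e : forall i j, E i -> E j)
  (hE : osp_diagram (fun i j : L => (i <= j)%O) e)
  (LE : opspace R) (cE : forall i, E i -> LE)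
  (hLE : osp_colimit (fun i j : L => (i <= j)%O) e cE) (u : LE) :
  exists k x, u = cE k x.
Proof.
have [h [_ hh]] := @colim_retract R d L Lne Ldir E e hE LE cE hLE.
rewrite -(hh u); case: (h u) => v /= /inimgP; exact.
Qed.

Lemma colim_approx (R : realType) (d : Order.disp_t) (L : porderType d)
  (Lne : exists l : L, True)
  (Ldir : forall a b : L, exists c, (a <= c)%O /\ (b <= c)%O)
  (E : L -> opspace R) (e : forall i j, E i -> E j)
  (hE : osp_diagram (fun i j : L => (i <= j)%O) e)
  (LE : opspace R) (cE : forall i, E i -> LE)
  (hLE : osp_colimit (fun i j : L => (i <= j)%O) e cE) m n (U : 'M[LE]_(m, n)) eps :
  0 < eps -> exists k (Y : 'M[E k]_(m, n)), map_mx (cE k) Y = U /\ mnorm Y < mnorm U + eps.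
Proof.
move=> e0; have [h [hcc hh]] := @colim_retract R d L Lne Ldir E e hE LE cE hLE.
have [k [Y [hY nY]]] := @N_approx R d L Lne Ldir E e LE cE hLE m n (map_mx h U) eps e0.
exists k, Y; split.
  by rewrite hY; apply/matrixP => a b; rewrite !mxE hh.
apply: lt_le_trans nY _; rewrite lerD2r.
exact: hcc.2.
Qed.

Section Generic.
Variable R : realType.
Local Notation C := (complex R).

Lemma tensor_ext (U V T W : lmodType C) (t : U -> V -> T) (ht : is_tensor t)
  (g1 g2 : T -> W) : lin g1 -> lin g2 -> (forall u v, g1 (t u v) = g2 (t u v)) ->
  forall z, g1 z = g2 z.
Proof.
move=> l1 l2 h z.
have hb : bilin (fun u v => g2 (t u v)).
  split => [v|u]; [exact: (lin_comp (ht.1.1 v) l2) | exact: (lin_comp (ht.1.2 u) l2)].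
have [h0 [_ hu]] := ht.2 W _ hb.
have e1 := hu g1 (conj l1 h).
have e2 := hu g2 (conj l2 (fun u v => erefl)).
by rewrite -e1 -e2.
Qed.

Lemma colim_ext (I : Type) (le : I -> I -> Prop) (E : I -> opspace R)
  (e : forall i j, E i -> E j) (LE : opspace R) (c : forall i, E i -> LE)
  (hc : osp_colimit le e c) (W : opspace R) (g1 g2 : LE -> W) :
  ccmap g1 -> ccmap g2 -> (forall i x, g1 (c i x) = g2 (c i x)) -> forall z, g1 z = g2 z.
Proof.
move=> c1 c2 h z.
have hcc : osp_cocone le e (fun i => g2 \o c i).
  split => [i|i j x ij /=]; first exact: ccmap_comp (hc.1.1 i) c2.
  by rewrite hc.1.2.
have [h0 [_ hu]] := hc.2 W _ hcc.
have e1 := hu g1 (conj c1 h).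
have e2 := hu g2 (conj c2 (fun i x => erefl)).
by rewrite -e1 -e2.
Qed.

Lemma map_tmulmx (U V T U' V' T' : lmodType C) (t : U -> V -> T) (t' : U' -> V' -> T')
  (g : T -> T') (phi : U -> U') (psi : V -> V') :
  lin g -> (forall x y, g (t x y) = t' (phi x) (psi y)) ->
  forall m k n (e : 'M[U]_(m, k)) (f : 'M[V]_(k, n)),
  map_mx g (tmulmx t e f) = tmulmx t' (map_mx phi e) (map_mx psi f).
Proof.
move=> lg h m k n e f; apply/matrixP => a b; rewrite !mxE (lin_sum lg).
by apply: eq_bigr => j _; rewrite h !mxE.
Qed.

Lemma prod_eps (x a b : R) : 0 <= a -> 0 <= b ->
  (forall del, 0 < del -> x <= (a + del) * (b + del)) -> x <= a * b.
Proof.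
move=> a0 b0 h; apply/ler_addgt0Pr => eps e0.
have K : 0 < a + b + 1 by rewrite ltr_wpDl // addr_ge0.
pose del := Num.min 1 (eps / (a + b + 1)).
have d0 : 0 < del by rewrite lt_min ltr01 divr_gt0.
have d1 : del <= 1 by rewrite ge_min lexx.
have d2 : del <= eps / (a + b + 1) by rewrite ge_min lexx orbT.
apply: le_trans (h del d0) _.
have -> : (a + del) * (b + del) = a * b + del * (a + b + del) by ring.
rewrite lerD2l.
apply: (@le_trans _ _ (del * (a + b + 1))).
  by apply: ler_wpM2l; [exact: ltW | rewrite lerD2l].
by rewrite -ler_pdivlMr.
Qed.

Lemma aleph1_ne (d : Order.disp_t) (L : porderType d) : aleph1_directed L -> exists l : L, True.
Proof. by move=> h; have [u _] := h set0 (countable0 _); exists u. Qed.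

Lemma aleph1_dir (d : Order.disp_t) (L : porderType d) : aleph1_directed L ->
  forall a b : L, exists c, (a <= c)%O /\ (b <= c)%O.
Proof.
move=> h a b; have [u hu] := h [set a; b] (finite_set_countable (finite_set2 a b)).
by exists u; split; apply: hu; [left|right].
Qed.
End Generic.

Section Main.
Local Unset Implicit Arguments.
Variables (R : realType) (d0 d1 : Order.disp_t) (L0 : porderType d0) (L1 : porderType d1).
Local Notation C := (complex R).
Variables (E : L0 -> opspace R) (e : forall i j, E i -> E j).
Hypothesis hE : osp_diagram (fun i j : L0 => (i <= j)%O) e.
Variables (F : L1 -> opspace R) (f : forall i j, F i -> F j).
Hypothesis hF : osp_diagram (fun i j : L1 => (i <= j)%O) f.
Variables (LE : opspace R) (cE : forall i, E i -> LE).
Hypothesis hLE : osp_colimit (fun i j : L0 => (i <= j)%O) e cE.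
Variables (LF : opspace R) (cF : forall i, F i -> LF).
Hypothesis hLF : osp_colimit (fun i j : L1 => (i <= j)%O) f cF.
Variables (H : L0 -> L1 -> opspace R) (tH : forall i j, E i -> F j -> H i j).
Hypothesis hH : forall i j, is_haagerup (tH i j).
Variable (hmap : forall p q : L0 * L1, H p.1 p.2 -> H q.1 q.2).
Hypothesis hhmap : forall p q : L0 * L1, prod_le p q ->
     lin (hmap p q) /\
     forall x y, hmap p q (tH p.1 p.2 x y) = tH q.1 q.2 (e p.1 q.1 x) (f p.2 q.2 y).
Variables (LH : opspace R) (cH : forall p : L0 * L1, H p.1 p.2 -> LH).
Hypothesis hLH : osp_colimit (E := fun p : L0 * L1 => H p.1 p.2) (@prod_le d0 d1 L0 L1) hmap cH.

Lemma cH_lin p : lin (cH p). Proof. exact: (hLH.1.1 p).1. Qed.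
Lemma cH_cc p m n (x : 'M[H p.1 p.2]_(m, n)) : mnorm (map_mx (cH p) x) <= mnorm x.
Proof. exact: (hLH.1.1 p).2. Qed.
Lemma tH_bilin i j : bilin (tH i j). Proof. exact: (hH i j).1.1. Qed.

(* fixed x with norm <= 1 gives a cocone over L1 *)
Lemma wdA_unit i (x : E i) : mnorm (const_mx x : 'M[E i]_(1, 1)) <= 1 ->
  forall j j' y y', cF j y = cF j' y' -> cH (i, j) (tH i j x y) = cH (i, j') (tH i j' x y').
Proof.
move=> x1.
pose G j (y : F j) : LH := cH (i, j) (tH i j x y).
have hG : osp_cocone (fun j j' : L1 => (j <= j')%O) f G.
  split.
    move=> j; split; first exact: (lin_comp ((tH_bilin i j).2 x) (cH_lin (i, j))).
    move=> m n Y.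
    have -> : map_mx (G j) Y = map_mx (cH (i, j)) (tmulmx (tH i j) (diagx m x) Y).
      by rewrite (tmul_diag_l (tH_bilin i j)) -map_mx_comp.
    apply: le_trans (cH_cc (i, j) _ _ _) _.
    apply: le_trans (haag_ub (hH i j) _ _) _.
    rewrite -[leRHS]mul1r; apply: ler_wpM2r; first exact: mnorm_ge0.
    exact: le_trans (mnorm_diagx m x) x1.
  move=> j j' y jj'; rewrite /G.
  have hle : prod_le (i, j) (i, j') by split => //=.
  have := (hhmap (i, j) (i, j') hle).2 x y; rewrite /= hE.2.1 // => <-.
  exact: (hLH.1.2 (i, j) (i, j') _ hle).
have [h [[hcc hh] _]] := hLF.2 LH G hG.
by move=> j j' y y' hy; rewrite -[LHS]hh -[RHS]hh hy.
Qed.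

Lemma wdB_unit j (y : F j) : mnorm (const_mx y : 'M[F j]_(1, 1)) <= 1 ->
  forall i i' x x', cE i x = cE i' x' -> cH (i, j) (tH i j x y) = cH (i', j) (tH i' j x' y).
Proof.
move=> y1.
pose G i (x : E i) : LH := cH (i, j) (tH i j x y).
have hG : osp_cocone (fun i i' : L0 => (i <= i')%O) e G.
  split.
    move=> i; split; first exact: (lin_comp ((tH_bilin i j).1 y) (cH_lin (i, j))).
    move=> m n X.
    have -> : map_mx (G i) X = map_mx (cH (i, j)) (tmulmx (tH i j) X (diagx n y)).
      by rewrite (tmul_diag_r (tH_bilin i j)) -map_mx_comp.
    apply: le_trans (cH_cc (i, j) _ _ _) _.
    apply: le_trans (haag_ub (hH i j) _ _) _.
    rewrite -[leRHS]mulr1; apply: ler_wpM2l; first exact: mnorm_ge0.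
    exact: le_trans (mnorm_diagx n y) y1.
  move=> i i' x ii'; rewrite /G.
  have hle : prod_le (i, j) (i', j) by split => //=.
  have := (hhmap (i, j) (i', j) hle).2 x y; rewrite /= hF.2.1 // => <-.
  exact: (hLH.1.2 (i, j) (i', j) _ hle).
have [h [[hcc hh] _]] := hLE.2 LH G hG.
by move=> i i' x x' hx; rewrite -[LHS]hh -[RHS]hh hx.
Qed.


Lemma scale_unit (V : opspace R) (x : V) :
  exists c : C, c != 0 /\ mnorm (const_mx (c *: x) : 'M[V]_(1, 1)) <= 1.
Proof.
pose s := mnorm (const_mx x : 'M[V]_(1, 1)) + 1.
have s0 : 0 < s by rewrite ltr_wpDl // mnorm_ge0.
exists (Complex (s^-1) 0); split.
  apply/eqP => /(congr1 (@complex.Re R)) /= /eqP; rewrite invr_eq0 => /eqP h.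
  by move: s0; rewrite h ltxx.
rewrite -map_const_mx mnormZ cabs_real ?invr_ge0 ?ltW //.
by rewrite ltr_pdivrMl // mulr1 /s ltrDl ltr01.
Qed.

Lemma wdA i (x : E i) j j' y y' : cF j y = cF j' y' ->
  cH (i, j) (tH i j x y) = cH (i, j') (tH i j' x y').
Proof.
move=> hy; have [c [c0 hc]] := scale_unit _ x.
have -> : x = c^-1 *: (c *: x) by rewrite scalerA mulVf // scale1r.
rewrite (linZ ((tH_bilin i j).1 y)) (linZ ((tH_bilin i j').1 y')).
rewrite (linZ (cH_lin (i, j))) (linZ (cH_lin (i, j'))).
by rewrite (wdA_unit i (c *: x) hc j j' y y' hy).
Qed.

Lemma wdB j (y : F j) i i' x x' : cE i x = cE i' x' ->
  cH (i, j) (tH i j x y) = cH (i', j) (tH i' j x' y).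
Proof.
move=> hx; have [c [c0 hc]] := scale_unit _ y.
have -> : y = c^-1 *: (c *: y) by rewrite scalerA mulVf // scale1r.
rewrite (linZ ((tH_bilin i j).2 x)) (linZ ((tH_bilin i' j).2 x')).
rewrite (linZ (cH_lin (i, j))) (linZ (cH_lin (i', j))).
by rewrite (wdB_unit j (c *: y) hc i i' x x' hx).
Qed.

Lemma wd i i' j j' x x' y y' : cE i x = cE i' x' -> cF j y = cF j' y' ->
  cH (i, j) (tH i j x y) = cH (i', j') (tH i' j' x' y').
Proof. by move=> hx hy; rewrite (wdA i x j j' y y' hy) (wdB j' y' i i' x x' hx). Qed.


Lemma main_iso (ne0 : exists l : L0, True)
  (dir0 : forall a b : L0, exists c, (a <= c)%O /\ (b <= c)%O)
  (ne1 : exists l : L1, True)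
  (dir1 : forall a b : L1, exists c, (a <= c)%O /\ (b <= c)%O)
  (T : opspace R) (tT : LE -> LF -> T) (hT : is_haagerup tT) :
  exists phi : LH -> T,
    (forall (p : L0 * L1) (x : E p.1) (y : F p.2),
        phi (cH p (tH p.1 p.2 x y)) = tT (cE p.1 x) (cF p.2 y)) /\
    osp_iso phi.
Proof.
have cE_lin i : lin (cE i) := (hLE.1.1 i).1.
have cF_lin j : lin (cF j) := (hLF.1.1 j).1.
have surjE := colim_surj ne0 dir0 hE hLE.
have surjF := colim_surj ne1 dir1 hF hLF.
have gex : forall p : L0 * L1, exists g : H p.1 p.2 -> T,
    lin g /\ forall x y, g (tH p.1 p.2 x y) = tT (cE p.1 x) (cF p.2 y).
  move=> p; have hb : bilin (fun x y => tT (cE p.1 x) (cF p.2 y)).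
    split => [y|x].
      exact: (lin_comp (cE_lin p.1) (hT.1.1.1 (cF p.2 y))).
    exact: (lin_comp (cF_lin p.2) (hT.1.1.2 (cE p.1 x))).
  by have [g [hg _]] := (hH p.1 p.2).1.2 T _ hb; exists g.
pose gp p := sval (cid (gex p)).
have hgp p : lin (gp p) /\ forall x y, gp p (tH p.1 p.2 x y) = tT (cE p.1 x) (cF p.2 y).
  exact: (svalP (cid (gex p))).
have gp_cc p : ccmap (gp p).
  split; first exact: (hgp p).1.
  move=> m n W.
  apply: (haag_lb (hH p.1 p.2) (Phi := fun W0 : 'M[H p.1 p.2]_(m, n) => mnorm (map_mx (gp p) W0))).
    move=> k X Y /=; rewrite (map_tmulmx (hgp p).1 (hgp p).2).
    apply: le_trans (haag_ub hT _ _) _.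
    by apply: ler_pM; rewrite ?mnorm_ge0 //; [exact: (hLE.1.1 _).2 | exact: (hLF.1.1 _).2].
  by rewrite /= (map_mx0' (hgp p).1) mnorm0.
have gp_coc : osp_cocone (@prod_le d0 d1 L0 L1) hmap gp.
  split => // p q w pq.
  apply: (tensor_ext (hH p.1 p.2).1 (lin_comp (hhmap p q pq).1 (hgp q).1) (hgp p).1).
  move=> x y /=; rewrite (hhmap p q pq).2 (hgp q).2 (hgp p).2.
  by rewrite (hLE.1.2 _ _ x pq.1) (hLF.1.2 _ _ y pq.2).
have [phi [[phi_cc phi_h] _]] := hLH.2 T gp gp_coc.
exists phi; split.
  by move=> p x y; rewrite phi_h (hgp p).2.
have exE : forall u : LE, exists s : {i : L0 & E i}, u = cE (tag s) (tagged s).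
  by move=> u; have [k [x ->]] := surjE u; exists (Tagged E x).
have exF : forall v : LF, exists s : {j : L1 & F j}, v = cF (tag s) (tagged s).
  by move=> v; have [k [y ->]] := surjF v; exists (Tagged F y).
pose sE u := sval (cid (exE u)).
pose sF v := sval (cid (exF v)).
pose b u v := cH (tag (sE u), tag (sF v)) (tH _ _ (tagged (sE u)) (tagged (sF v))).
have hb i j x y : b (cE i x) (cF j y) = cH (i, j) (tH i j x y).
  rewrite /b; apply: wd.
    exact: (esym (svalP (cid (exE (cE i x))))).
  exact: (esym (svalP (cid (exF (cF j y))))).
have b_bil : bilin b.
  split.
    move=> v a u u'.
    have [j [y ->]] := surjF v; have [i [x ->]] := surjE u; have [i' [x' ->]] := surjE u'.
    have [k [ik i'k]] := dir0 i i'.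
    rewrite -(hLE.1.2 _ _ x ik) -(hLE.1.2 _ _ x' i'k).
    rewrite -(linZ (cE_lin k)) -(linD (cE_lin k)) !hb.
    have := (tH_bilin k j).1 y a (e i k x) (e i' k x') => /= ->.
    by rewrite (cH_lin (k, j)).
  move=> u a v v'.
  have [i [x ->]] := surjE u; have [j [y ->]] := surjF v; have [j' [y' ->]] := surjF v'.
  have [k [jk j'k]] := dir1 j j'.
  rewrite -(hLF.1.2 _ _ y jk) -(hLF.1.2 _ _ y' j'k).
  rewrite -(linZ (cF_lin k)) -(linD (cF_lin k)) !hb.
  have := (tH_bilin i k).2 x a (f j k y) (f j' k y') => /= ->.
  by rewrite (cH_lin (i, k)).
have [g [[g_lin g_h] _]] := hT.1.2 LH b b_bil.
have g_cc : ccmap g.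
  split => // m n Z.
  apply: (haag_lb hT (Phi := fun Z0 : 'M[T]_(m, n) => mnorm (map_mx g Z0))); last first.
    by rewrite /= (map_mx0' g_lin) mnorm0.
  move=> k X Y /=.
  rewrite (map_tmulmx (phi := id) (psi := id) g_lin g_h) !map_mx_id //.
  apply: prod_eps; [exact: mnorm_ge0 | exact: mnorm_ge0 |] => del d0'.
  have [i [X' [hX nX]]] := colim_approx ne0 dir0 hE hLE X d0'.
  have [j [Y' [hY nY]]] := colim_approx ne1 dir1 hF hLF Y d0'.
  have -> : tmulmx b X Y = map_mx (cH (i, j)) (tmulmx (tH i j) X' Y').
    rewrite (map_tmulmx (t' := b) (phi := cE i) (psi := cF j) (cH_lin (i, j))); last first.
      by move=> x y; rewrite hb.
    by rewrite hX hY.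
  apply: le_trans (cH_cc (i, j) _ _ _) _.
  apply: le_trans (haag_ub (hH i j) _ _) _.
  by apply: ler_pM; rewrite ?mnorm_ge0 //; exact: ltW.
split => //; exists g; split => //; split => z.
  have := colim_ext hLH (ccmap_comp phi_cc g_cc) (ccmap_id LH) _ z; apply.
  move=> [i j] w /=; rewrite phi_h.
  apply: (tensor_ext (hH i j).1 (lin_comp (hgp (i, j)).1 g_lin) (cH_lin (i, j))).
  by move=> x y /=; rewrite (hgp (i, j)).2 g_h hb.
have := tensor_ext hT.1 (lin_comp g_lin phi_cc.1) (@lin_id _ T) _ z; apply.
move=> u v /=; have [i [x ->]] := surjE u; have [j [y ->]] := surjF v.
by rewrite g_h hb phi_h (hgp (i, j)).2.
Qed.

End Main.

Unset Implicit Arguments.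
Local Close Scope classical_set_scope.
Local Close Scope ring_scope.

Theorem lemma2p5 (R : realType)
  (d0 d1 : Order.disp_t) (L0 : porderType d0) (L1 : porderType d1)
  (hL0 : aleph1_directed L0) (hL1 : aleph1_directed L1)
  (* the diagram (E_l0) over L0 *)
  (E : L0 -> opspace R) (e : forall i j, E i -> E j)
  (hE : osp_diagram (fun i j : L0 => (i <= j)%O) e)
  (* the diagram (F_l1) over L1 *)
  (F : L1 -> opspace R) (f : forall i j, F i -> F j)
  (hF : osp_diagram (fun i j : L1 => (i <= j)%O) f)
  (* colim E and colim F *)
  (LE : opspace R) (cE : forall i, E i -> LE)
  (hLE : osp_colimit (fun i j : L0 => (i <= j)%O) e cE)
  (LF : opspace R) (cF : forall i, F i -> LF)
  (hLF : osp_colimit (fun i j : L1 => (i <= j)%O) f cF)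
  (* the Haagerup tensor products E_l0 (x)_h F_l1 *)
  (H : L0 -> L1 -> opspace R) (tH : forall i j, E i -> F j -> H i j)
  (hH : forall i j, is_haagerup (tH i j))
  (* the induced diagram over L0 x L1, with maps e_{l0 m0} (x) f_{l1 m1} *)
  (hmap : forall p q : L0 * L1, H p.1 p.2 -> H q.1 q.2)
  (hhmap : forall p q : L0 * L1, prod_le p q ->
     lin (hmap p q) /\
     forall x y, hmap p q (tH p.1 p.2 x y) = tH q.1 q.2 (e p.1 q.1 x) (f p.2 q.2 y))
  (* its colimit *)
  (LH : opspace R) (cH : forall p : L0 * L1, H p.1 p.2 -> LH)
  (hLH : osp_colimit (E := fun p : L0 * L1 => H p.1 p.2) (@prod_le d0 d1 L0 L1) hmap cH)
  (* (colim E) (x)_h (colim F) *)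
  (T : opspace R) (tT : LE -> LF -> T) (hT : is_haagerup tT) :
  exists phi : LH -> T,
    (forall (p : L0 * L1) (x : E p.1) (y : F p.2),
        phi (cH p (tH p.1 p.2 x y)) = tT (cE p.1 x) (cF p.2 y)) /\
    osp_iso phi.
Proof.
exact: (main_iso R d0 d1 L0 L1 E e hE F f hF LE cE hLE LF cF hLF H tH hH hmap hhmap LH cH hLH
  (aleph1_ne hL0) (aleph1_dir hL0) (aleph1_ne hL1) (aleph1_dir hL1) T tT hT).
Qed.
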